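(* Consider the system \[ x_{k+1} = x_k - \rho y_k + \hat g(y_k,w_k),\qquad y_{k+1} = (1-\beta)y_k + \hat h(y_{k-1},w_{k-1})\bigl(J(x_k)-J(x_{k-1})\bigr) \] with the setup described in the context. Then for any $k\ge1$, \[ \mathbb{E}[\mu h_{k-1}g_{k-1}\Delta_{k-1}]=\frac{\mu\gamma}{2}\Bigl(\rho^2\mathbb{E}[y_{k-1}^2]-2\rho\,\mathbb{E}[\tilde x_{k-1}y_{k-1}]+\psi\,\mathbb{E}\bigl[(|y_{k-1}|+\varepsilon)^2\bigr]\Bigr). \]
   Context: Setup. Parameters: $\rho>0$, $\beta\in(0,2)$, $\varepsilon>0$, $\omega>0$. The random variables $w_i$, $i\in\mathbb{N}\cup\{0\}$, are i.i.d., each taking the value $-\omega$ or $\omega$ with probability $1/2$. The functions $h,g:\mathbb{R}\to\mathbb{R}$ are odd, satisfy $\mathrm{sign}(g(w))=\mathrm{sign}(h(w))$ for all $w$, and $g(w)=h(w)=0$ if and only if $w=0$. Define $\hat h(y,w):=\frac{h(w)}{|y|+\varepsilon}$ and $\hat g(y,w):=(|y|+\varepsilon)g(w)$. The objective is $J(x)=J^*+\frac{\mu}{2}(x-x^* )^2$ with $\mu>0$, $x^*,J^*\in\mathbb{R}$. The initial data $x_0,y_0$ and the initialization $y_1$ (the $y$-update being applied for $k\ge1$) are deterministic. Notation: $h_k:=h(w_k)$, $g_k:=g(w_k)$, $\tilde x_k:=x_k-x^*$, $\psi:=\mathbb{E}[g_k^2]$, $\gamma:=\mathbb{E}[h_kg_k]$,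 and \[ \Delta_{k-1}:=(\tilde x_{k-1}-\rho y_{k-1})(|y_{k-1}|+\varepsilon)g_{k-1}-\rho\tilde x_{k-1}y_{k-1}+\tfrac{\rho^2}{2}y_{k-1}^2+\tfrac{g_{k-1}^2}{2}(|y_{k-1}|+\varepsilon)^2 . \] *)

(* Defs.v *)
From mathcomp Require Import all_boot all_order all_algebra.
Set Implicit Arguments. Unset Strict Implicit. Unset Printing Implicit Defensive.
Import Order.TTheory GRing.Theory Num.Theory.
Local Open Scope ring_scope.

Section Defs.
Variable R : realFieldType.

(* realisation of the noise sequence from a sign pattern b over 'I_N:
   w_i = omega if b_i, -omega otherwise (w_i := 0 for i >= N, never used). *)
Definition wseq (omega : R) (N : nat) (b : {ffun 'I_N -> bool}) : nat -> R :=
  fun i => match insub i with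
           | Some j => if b j then omega else - omega
           | None => 0
           end.

(* Expectation of a functional of (w_0,...,w_{N-1}), with the w_i i.i.d.
   uniform on {-omega, omega}: average over all 2^N sign patterns. *)
Definition Exp (omega : R) (N : nat) (F : (nat -> R) -> R) : R :=
  (\sum_(b : {ffun 'I_N -> bool}) F (wseq omega b)) / (2 ^+ N).

Definition Exp1 (omega : R) (f : R -> R) : R := (f omega + f (- omega)) / 2.

Definition ghat (eps : R) (g : R -> R) (y w : R) : R := (`|y| + eps) * g w.
Definition hhat (eps : R) (h : R -> R) (y w : R) : R := h w / (`|y| + eps).

Definition Jq (Jstar mu xstar : R) (x : R) : R := Jstar + mu / 2 * (x - xstar) ^+ 2.

(* state at step n: (x_n, x_{n+1}, y_n, y_{n+1}), for the noise path w.
   x_{k+1} = x_k - rho y_k + ghat(y_k, w_k)   (k >= 0)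
   y_{k+1} = (1-beta) y_k + hhat(y_{k-1}, w_{k-1}) (J x_k - J x_{k-1})  (k >= 1)
   with x_0, y_0, y_1 given. *)
Fixpoint state (rho beta eps : R) (h g J : R -> R) (x0 y0 y1 : R)
  (w : nat -> R) (n : nat) : R * R * R * R :=
  match n with
  | 0 => (x0, x0 - rho * y0 + ghat eps g y0 (w 0), y0, y1)
  | n'.+1 =>
      let '(xa, xb, ya, yb) := state rho beta eps h g J x0 y0 y1 w n' in
      (xb, xb - rho * yb + ghat eps g yb (w n),
       yb, (1 - beta) * yb + hhat eps h ya (w n') * (J xb - J xa))
  end.

Definition xs rho beta eps h g J x0 y0 y1 w n :=
  (state rho beta eps h g J x0 y0 y1 w n).1.1.1.
Definition ys rho beta eps h g J x0 y0 y1 w n :=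
  (state rho beta eps h g J x0 y0 y1 w n).1.2.

End Defs.

(* Main.v *)
Require Import Defs.
From mathcomp Require Import all_boot all_order all_algebra.
From mathcomp Require Import ring lra zify.
Import Order.TTheory GRing.Theory Num.Theory.
Local Open Scope ring_scope.
Lemma state_agree (R : realFieldType) (rho beta eps : R) h g J x0 y0 y1 (w w' : nat -> R) m :
  (forall i, (i <= m)%N -> w i = w' i) ->
  state rho beta eps h g J x0 y0 y1 w m = state rho beta eps h g J x0 y0 y1 w' m.
Proof.
elim: m => [|m IH] H /=; first by rewrite H.
rewrite IH; last by move=> i Hi; apply: H; lia.
case: (state _ _ _ _ _ _ _ _ _ w' m) => [[[xa xb] ya] yb].
by rewrite (H m.+1) // (H m) //; lia.
Qed.

Lemma xy_agree (R : realFieldType) (rho beta eps : R) h g J x0 y0 y1 (w w' : nat -> R) n :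
  (forall i, (i < n)%N -> w i = w' i) ->
  xs rho beta eps h g J x0 y0 y1 w n = xs rho beta eps h g J x0 y0 y1 w' n /\
  ys rho beta eps h g J x0 y0 y1 w n = ys rho beta eps h g J x0 y0 y1 w' n.
Proof.
case: n => [|m] H; first by rewrite /xs /ys.
rewrite /xs /ys /= (@state_agree _ _ _ _ _ _ _ _ _ _ w w'); last by move=> i Hi; apply: H; lia.
by case: (state _ _ _ _ _ _ _ _ _ w' m) => [[[? ?] ?] ?].
Qed.

Definition fl {N} (j : 'I_N) (b : {ffun 'I_N -> bool}) : {ffun 'I_N -> bool} :=
  [ffun i => if i == j then ~~ b i else b i].

Lemma flK {N} (j : 'I_N) : involutive (fl j).
Proof. move=> b; apply/ffunP => i; rewrite !ffunE; case: eqP => //; by rewrite negbK. Qed.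

Lemma wseq_fl (R : realFieldType) (om : R) N (j : 'I_N) b i :
  wseq om (fl j b) i = if i == val j then - wseq om b i else wseq om b i.
Proof.
rewrite /wseq; case: insubP => [u _ Hu|Hn].
  rewrite ffunE -Hu (inj_eq val_inj); case: eqP => // _; case: (b u) => //=; by rewrite opprK.
case: eqP => // E; exfalso; move/negP: Hn; apply; by rewrite E ltn_ord.
Qed.

Lemma sum_fl (R : realFieldType) N (j : 'I_N) (F : {ffun 'I_N -> bool} -> R) :
  \sum_b F b = \sum_b F (fl j b).
Proof. apply: reindex_inj; exact: can_inj (flK j). Qed.

Lemma wseq_j (R : realFieldType) (om : R) N (j : 'I_N) b :
  wseq om b (val j) = if b j then om else - om.
Proof.
rewrite /wseq; case: insubP => [u _ Hu|Hn]; first by rewrite (val_inj Hu).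
by move/negP: Hn; rewrite ltn_ord.
Qed.

Theorem lemma4 (R : realFieldType)
  (rho beta eps omega mu xstar Jstar x0 y0 y1 : R) (h g : R -> R)
  (Hrho : 0 < rho) (Hbeta : 0 < beta < 2) (Heps : 0 < eps) (Homega : 0 < omega)
  (Hmu : 0 < mu)
  (Hh_odd : forall w, h (- w) = - h w) (Hg_odd : forall w, g (- w) = - g w)
  (Hsign : forall w, Num.sg (g w) = Num.sg (h w))
  (Hg0 : forall w, g w = 0 <-> w = 0) (Hh0 : forall w, h w = 0 <-> w = 0)
  (k N : nat) (Hk : (1 <= k)%N) (HN : (k <= N)%N) :
  let J := Jq Jstar mu xstar in
  let x := xs rho beta eps h g J x0 y0 y1 in
  let y := ys rho beta eps h g J x0 y0 y1 in
  let xt := fun w n => x w n - xstar in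
  let psi := Exp1 omega (fun v => g v ^+ 2) in
  let gamma := Exp1 omega (fun v => h v * g v) in
  let Delta := fun w n =>
    (xt w n - rho * y w n) * (`|y w n| + eps) * g (w n)
    - rho * xt w n * y w n + rho ^+ 2 / 2 * y w n ^+ 2
    + g (w n) ^+ 2 / 2 * (`|y w n| + eps) ^+ 2 in
  Exp omega N (fun w => mu * h (w k.-1) * g (w k.-1) * Delta w k.-1)
  = mu * gamma / 2 *
    (rho ^+ 2 * Exp omega N (fun w => y w k.-1 ^+ 2)
     - 2 * rho * Exp omega N (fun w => xt w k.-1 * y w k.-1)
     + psi * Exp omega N (fun w => (`|y w k.-1| + eps) ^+ 2)).
Proof.
move=> J x y xt psi gamma Delta.
have Hp : (k.-1 < N)%N by lia.
pose j := Ordinal Hp.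
have Ej : k.-1 = val j by [].
rewrite Ej /Exp.
pose c := h omega * g omega.
pose G := g omega.
have Hgam : gamma = c by rewrite /gamma /Exp1 Hh_odd Hg_odd mulrNN /c; field.
have Hpsi : psi = G ^+ 2 by rewrite /psi /Exp1 Hg_odd sqrrN /G; field.
have agree : forall b, x (wseq omega (fl j b)) (val j) = x (wseq omega b) (val j) /\
                       y (wseq omega (fl j b)) (val j) = y (wseq omega b) (val j).
  move=> b; apply: xy_agree => i Hi; rewrite wseq_fl; case: eqP => // E; lia.
pose A := fun w : nat -> R => mu * h (w (val j)) * g (w (val j)) * g (w (val j)) *
   ((xt w (val j) - rho * y w (val j)) * (`|y w (val j)| + eps)).
have S0 : \sum_(b : {ffun 'I_N -> bool}) A (wseq omega b) = 0.
  have : \sum_(b : {ffun 'I_N -> bool}) A (wseq omega b) = - \sum_(b : {ffun 'I_N -> bool}) A (wseq omega b).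
    rewrite {1}(@sum_fl R N j (fun b => A (wseq omega b))) -sumrN; apply: eq_bigr => b _.
    rewrite /A /xt !wseq_fl eqxx; case: (agree b) => -> ->.
    rewrite Hh_odd Hg_odd; ring.
  move=> H; lra.
rewrite (eq_bigr (fun b => A (wseq omega b) + mu * c / 2 *
   (rho ^+ 2 * y (wseq omega b) (val j) ^+ 2
    - 2 * rho * (xt (wseq omega b) (val j) * y (wseq omega b) (val j))
    + G ^+ 2 * (`|y (wseq omega b) (val j)| + eps) ^+ 2))); last first.
  move=> b _; rewrite /A /Delta !wseq_j /c /G; case: (b j); rewrite ?Hh_odd ?Hg_odd; by field.
rewrite big_split /=.
rewrite S0 add0r -mulr_sumr !big_split /= sumrN -!mulr_sumr Hgam Hpsi.
field. by rewrite expf_neq0 // pnatr_eq0.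
Qed.
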